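(* Let $\gamma_1,\dots,\gamma_n$ be programs with common recorder $h$ and let $h_0$ be a fresh trace variable. For each $j$ let $v_j$ be a state and $Y_j\supseteq CN(\gamma_j)$ a channel set with $v_j\models h_0\downarrow Y_j=h\downarrow Y_j$; let $(v_j,\tau_j,w_j)\in[\![\gamma_j]\!]$ and let $\tau_{ej}$ be a recorded trace with $\tau_j=\tau_{ej}\downarrow Y_j$. Let $\tilde v$ be a state such that at least one of the following holds: (1) for all $j$, $\tilde v=v_j\cdot\tau_{ej}$; or (2) for all $j$, $\tilde v=w_{ej}\cdot\tau_{ej}$ for some state $w_{ej}$ with $w_{ej}=w_j$ on $\{h_0,h\}$ (in particular $w_j\ne\bot$). Then for every channel set $Y\supseteq\bigcup_jCN(\gamma_j)$: if $\tilde v\models h\downarrow Y\succeq h_0$, there is a suffix $\tau_h$ of $\tilde v(h)$ (i.e. $\tilde v(h)=\rho\cdot\tau_h$ for some trace $\rho$) such that $\tau_h\downarrow\gamma_j=\tau_j(h)$ for all $j$ and $\tilde v(h)\downarrow Y=\tilde v(h_0)\cdot(\tau_h\downarrow Y)$.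
   Context: Communicating hybrid programs (CHPs) over real variables, trace variables and channels $\mathbb N$; each program binds at most one trace variable, its recorder. Traces are finite sequences of events $\langle ch,a,d\rangle\in\mathbb N\times\mathbb R\times\mathbb R$; $\tau\downarrow Y$ deletes events with channel outside $Y$; $\tau\downarrow\gamma$ projects onto the channels of program $\gamma$; $\preceq$ is the prefix order ($\succeq$ its converse). A recorded trace is a pair $(h,\tau)$, viewed also as the map sending $h$ to $\tau$ and all other trace variables to $\epsilon$; projection acts pointwise, so $\tau_{ej}\downarrow Y_j$ and $\tau_j(h)$ make sense. States map real variables to reals and trace variables to traces; $v\cdot(h,\tau)$ is $v$ with $v(h)$ replaced by $v(h)\cdot\tau$. The semantics $[\![\gamma]\!]$ of a program is a set of runs $(v,\tau,w)$: initial state $v$, communication $\tau$ recorded by the program's recorder, final state $w$ or $\bot$ (unfinished). $CN(\gamma)$ is the set of channels $ch$ such that $\tau\downarrow\{ch\}\ne\epsilon$ for some run $(v,\tau,w)\in[\![\gamma]\!]$. Bound-effect property: for every run $(v,\tau,w)$ with $w\ne\bot$, $v=w$ on trace variables and on all variables not bound by $\gamma$ (in particular $w(h_0)=v(h_0)$ and $w(h)=v(h)$ for the recorder $h$). *)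

(* Defs.v *)
From Stdlib Require Import Reals List Arith PeanoNat ClassicalDescription.
Import ListNotations.
Open Scope R_scope.

(* channels are nat; events <ch, a, d> *)
Definition event : Type := (nat * R * R)%type.
Definition ev_ch (e : event) : nat := fst (fst e).
Definition trace : Type := list event.

Definition chset : Type := nat -> Prop.

Definition proj (Y : chset) (t : trace) : trace :=
  filter (fun e => if excluded_middle_informative (Y (ev_ch e)) then true else false) t.

Record state : Type := mkState { rv : nat -> R ; tv : nat -> trace }.

Definition rtrace : Type := (nat * trace)%type.

Definition rmap (r : rtrace) : nat -> trace :=
  fun x => if Nat.eqb x (fst r) then snd r else [].

Definition rproj (Y : chset) (r : rtrace) : nat -> trace :=
  fun x => proj Y (rmap r x).

Definition upd (v : state) (r : rtrace) : state :=
  mkState (rv v) (fun x => if Nat.eqb x (fst r) then tv v x ++ snd r else tv v x).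

Definition prefix (s t : trace) : Prop := exists u, t = s ++ u.

(* A program is given by its semantics [[gamma]]: a set of runs (v, tau, w),
   tau the communication recorded by the program's recorder, w = None for bot. *)
Definition prog : Type := state -> trace -> option state -> Prop.

Definition CN (g : prog) : chset :=
  fun ch => exists v t w, g v t w /\ proj (fun c => c = ch) t <> [].

Definition bound_effect_tv (g : prog) : Prop :=
  forall v t w, g v t (Some w) -> forall x, tv w x = tv v x.

(* Main.v *)
Require Import Defs.
From Stdlib Require Import Reals List Arith ClassicalDescription.
Import ListNotations.

Lemma proj_app P a b : proj P (a++b) = proj P a ++ proj P b.
Proof. unfold proj. apply filter_app. Qed.

Lemma proj_proj (P Q : chset) l : (forall c, P c -> Q c) -> proj P (proj Q l) = proj P l.
Proof.
  intros H. induction l as [|e l IH]; [reflexivity|]. unfold proj in *; simpl.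
  destruct (excluded_middle_informative (Q (ev_ch e))) as [q|q]; simpl;
  destruct (excluded_middle_informative (P (ev_ch e))) as [p|p]; try rewrite IH; auto.
  exfalso; auto.
Qed.

Lemma proj_id (P : chset) l : (forall e, In e l -> P (ev_ch e)) -> proj P l = l.
Proof.
  intros H. induction l as [|e l IH]; [reflexivity|]. unfold proj in *; simpl.
  destruct (excluded_middle_informative (P (ev_ch e))) as [p|p].
  - rewrite IH; auto. intros; apply H; simpl; auto.
  - exfalso; apply p, H; simpl; auto.
Qed.

Lemma tau_in_CN (g : prog) v t w : g v t w -> forall e, In e t -> CN g (ev_ch e).
Proof.
  intros Hg e He. exists v, t, w. split; [exact Hg|].
  intros Hn. assert (In e (proj (fun c => c = ev_ch e) t)).
  { unfold proj. apply filter_In. split; [exact He|].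
    destruct (excluded_middle_informative (ev_ch e = ev_ch e)); auto. }
  rewrite Hn in H. exact H.
Qed.

Lemma suffix_proj (Y : chset) l : forall p u, proj Y l = p ++ u ->
  exists r t, l = r ++ t /\ proj Y t = u.
Proof.
  induction l as [|e l IH]; intros p u H.
  - exists [], []. destruct p; destruct u; simpl in *; try discriminate; auto.
  - unfold proj in H; simpl in H.
    destruct (excluded_middle_informative (Y (ev_ch e))) as [y|y].
    + destruct p as [|e' p].
      * exists [], (e::l). split; [reflexivity|]. unfold proj; simpl.
        destruct (excluded_middle_informative (Y (ev_ch e))); [|contradiction].
        simpl in H. exact H.
      * simpl in H. injection H as _ H.
        destruct (IH p u H) as [r [t [E1 E2]]]. exists (e::r), t.
        rewrite E1; auto.
    + destruct (IH p u H) as [r [t [E1 E2]]]. exists (e::r), t. rewrite E1; auto.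
Qed.

Theorem lemmaC1 (n : nat) (gamma : nat -> prog) (h h0 : nat)
  (Hfresh : h0 <> h)
  (Hbe : forall j, (j < n)%nat -> bound_effect_tv (gamma j))
  (v : nat -> state) (Yj : nat -> chset) (tau : nat -> trace)
  (w : nat -> option state) (tauE : nat -> rtrace) (vt : state)
  (HY : forall j, (j < n)%nat -> forall ch, CN (gamma j) ch -> Yj j ch)
  (Hv : forall j, (j < n)%nat -> proj (Yj j) (tv (v j) h0) = proj (Yj j) (tv (v j) h))
  (Hrun : forall j, (j < n)%nat -> gamma j (v j) (tau j) (w j))
  (Htau : forall j, (j < n)%nat -> rmap (h, tau j) = rproj (Yj j) (tauE j))
  (Hcase : (forall j, (j < n)%nat -> vt = upd (v j) (tauE j)) \/
           (forall j, (j < n)%nat -> exists (wej wj : state),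
               w j = Some wj /\ tv wej h0 = tv wj h0 /\ tv wej h = tv wj h /\
               vt = upd wej (tauE j))) :
  forall Y : chset,
    (forall j, (j < n)%nat -> forall ch, CN (gamma j) ch -> Y ch) ->
    prefix (tv vt h0) (proj Y (tv vt h)) ->
    exists rho tauh : trace,
      tv vt h = rho ++ tauh /\
      (forall j, (j < n)%nat -> proj (CN (gamma j)) tauh = tau j) /\
      proj Y (tv vt h) = tv vt h0 ++ proj Y tauh.
Proof.
  intros Y HYc [u Hu].
  destruct (suffix_proj _ _ _ _ Hu) as [r [t [E1 E2]]].
  exists r, t. split; [exact E1|]. split; [| rewrite E2; exact Hu].
  intros j Hj.
  assert (Hs : exists s, tv s h = tv (v j) h /\ tv s h0 = tv (v j) h0 /\ vt = upd s (tauE j)).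
  { destruct Hcase as [Hc|Hc].
    - exists (v j). auto.
    - destruct (Hc j Hj) as [wej [wj [Hw [A [B C]]]]].
      pose proof (Hrun j Hj) as R. rewrite Hw in R.
      pose proof (Hbe j Hj _ _ _ R) as BE.
      exists wej. rewrite A, B, !BE. auto. }
  destruct Hs as [s [Sh [Sh0 Hvt]]].
  set (CNj := CN (gamma j)).
  assert (K : proj CNj (tv vt h) = proj CNj (tv vt h0) ++ proj CNj t).
  { rewrite <- (proj_proj CNj Y (tv vt h)) by (apply HYc; exact Hj).
    rewrite Hu, proj_app, <- E2, proj_proj by (apply HYc; exact Hj). reflexivity. }
  assert (HvC : proj CNj (tv (v j) h0) = proj CNj (tv (v j) h)).
  { rewrite <- (proj_proj CNj (Yj j) (tv (v j) h0)) by (apply HY; exact Hj).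
    rewrite <- (proj_proj CNj (Yj j) (tv (v j) h)) by (apply HY; exact Hj).
    rewrite Hv by exact Hj. reflexivity. }
  assert (tauC : proj CNj (tau j) = tau j).
  { apply proj_id. intros e He. exact (tau_in_CN _ _ _ _ (Hrun j Hj) e He). }
  pose proof (Htau j Hj) as T. destruct (tauE j) as [x s'] eqn:Ex.
  pose proof (f_equal (fun f => f h) T) as Th. pose proof (f_equal (fun f => f x) T) as Tx.
  unfold rmap, rproj, rmap in Th, Tx; simpl in Th, Tx.
  rewrite Nat.eqb_refl in Th, Tx.
  rewrite Hvt in K. unfold upd in K; simpl in K.
  destruct (Nat.eqb h x) eqn:Ehx.
  - apply Nat.eqb_eq in Ehx. subst x.
    assert (E0 : Nat.eqb h0 h = false) by (apply Nat.eqb_neq; exact Hfresh).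
    rewrite ?Nat.eqb_refl, E0 in K. rewrite proj_app, Sh, Sh0, HvC in K.
    apply app_inv_head in K.
    rewrite <- tauC, Th, proj_proj by (apply HY; exact Hj). symmetry; exact K.
  - assert (Exh : Nat.eqb x h = false) by (rewrite Nat.eqb_sym; exact Ehx).
    rewrite Exh in Tx. rewrite Th.
    assert (Hc : proj CNj (if Nat.eqb h0 x then s' else []) = []).
    { destruct (Nat.eqb h0 x); [|reflexivity].
      rewrite <- (proj_proj CNj (Yj j)) by (apply HY; exact Hj).
      rewrite <- Tx. reflexivity. }
    assert (K' : proj CNj (tv s h) = proj CNj (tv s h0) ++ proj CNj t).
    { revert K Hc. destruct (Nat.eqb h0 x); intros K Hc; [|exact K].
      rewrite proj_app, Hc, app_nil_r in K. exact K. }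
    clear K. rename K' into K. rewrite Sh, Sh0, HvC in K.
    rewrite <- (app_nil_r (proj CNj (tv (v j) h))) in K at 1.
    apply app_inv_head in K. symmetry; exact K.
Qed.
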